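(* For all integers $n\ge1$ and $1\le q\le 2^{n-1}$, we have $\overline{\xi_f}(E_{2^n/q})=\dfrac{2^n}{q}$.
   Context: For $p,k\in\mathbb{N}$ with $p/k\ge2$, the fraction graph $E_{p/k}$ has vertex set $\mathbb{Z}_p$, and distinct vertices $i,j$ are adjacent iff their cyclic distance $\min(|i-j|,p-|i-j|)$ is strictly less than $k$; here $p=2^n$, $k=q$. For a graph $G$, $\overline{\xi_f}(G)$ (complement of the projective rank) is the infimum of $d/r$ over all $d,r\in\mathbb{N}$ for which there is an assignment of $r$-dimensional subspaces $W_v\le\mathbb{C}^d$ to the vertices of $G$ such that distinct non-adjacent vertices receive orthogonal subspaces. *)

(* Defs.v *)
From mathcomp Require Import all_boot all_algebra.
From mathcomp Require Import complex.
From mathcomp Require Import classical_sets reals Rstruct.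
Import GRing.Theory Num.Theory.

Set Implicit Arguments.
Unset Strict Implicit.
Unset Printing Implicit Defensive.

Local Open Scope ring_scope.

Definition C : numClosedFieldType := (Rdefinitions.R)[i].

Definition adjmx (m n : nat) (A : 'M[C]_(m, n)) : 'M[C]_(n, m) :=
  (map_mx Num.conj A)^T.

(** An orthogonal representation in dimension [d] with rank
    [r]: an assignment of r-dimensional subspaces W_v <= C^d (the row spaces
    of full-rank r x d matrices) such that distinct non-adjacent vertices
    receive orthogonal subspaces (w.r.t. the standard Hermitian product). *)
Definition subspace_rep (V : finType) (adj : rel V) (d r : nat) : Prop :=
  exists W : V -> 'M[C]_(r, d),
    (forall v, \rank (W v) = r) /\
    (forall u v, u != v -> ~~ adj u v -> W u *m adjmx (W v) = 0).

Definition xi_f_bar (V : finType) (adj : rel V) : Rdefinitions.R :=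
  inf [set x : Rdefinitions.R | exists d r : nat, (0 < d)%N /\ (0 < r)%N /\
         subspace_rep adj d r /\ x = (d%:R / r%:R)].

Definition cycdist (p : nat) (i j : 'I_p) : nat :=
  minn ((i - j) + (j - i))%N (p - ((i - j) + (j - i)))%N.

Definition fraction_graph (p k : nat) : rel 'I_p :=
  fun i j => (i != j) && (cycdist i j < k)%N.
Arguments fraction_graph p k : clear implicits.

(* Main.v *)
Require Import Defs.
From mathcomp Require Import all_boot all_algebra.
From mathcomp Require Import complex classical_sets reals Rstruct.
From mathcomp Require Import zify.
Import GRing.Theory Num.Theory.
Set Implicit Arguments.
Unset Strict Implicit.
Unset Printing Implicit Defensive.

Module ArithPart.
Local Open Scope nat_scope.
Definition off p x y := if x <= y then y - x else y + p - x.
Definition far p q x y := (q <= off p x y) && (off p x y <= p - q).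
Definition sc p x := if x.+1 == p then 0 else x.+1.

Lemma far_U p q x y : x < p -> y < p -> 1 <= q -> far p q.+1 x y ->
  [/\ far p q x y, far p q x (sc p y), far p q (sc p x) y & far p q (sc p x) (sc p y)].
Proof. move=> hx hy hq; rewrite /far /off /sc => h; split; move: h; repeat case: ifP; lia. Qed.

Lemma far_V p q x y : x < p -> y < p -> 2 <= q -> 2 * q <= p -> far p q.-1 x y ->
  [\/ far p q x y, far p q x (sc p y) | far p q (sc p x) y].
Proof. move=> hx hy hq hp.
move=> h; apply/or3P; move: h.
rewrite /far /off /sc. repeat case: ifP; lia.
Qed.

Lemma far1 p x y : x < p -> y < p -> far p 1 x y -> x != y.
Proof. rewrite /far /off; case: ifP; lia. Qed.

Lemma sc_lt p x : x < p -> sc p x < p.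
Proof. rewrite /sc; case: ifP; lia. Qed.

Lemma far_even a b i j : i < a -> j < a -> far a b i j -> far (2 * a) (2 * b) (2 * i) (2 * j).
Proof. rewrite /far /off; repeat case: ifP; lia. Qed.

Lemma far_odd a b i j : i < a -> j < a -> far a b i j -> far (2 * a) (2 * b) (2 * i + 1) (2 * j + 1).
Proof. rewrite /far /off; repeat case: ifP; lia. Qed.

Lemma far_cyc p q x y : x < p -> y < p -> 1 <= q -> far p q x y ->
  (x != y) && (q <= minn ((x - y) + (y - x)) (p - ((x - y) + (y - x)))).
Proof. rewrite /far /off; case: ifP; lia. Qed.

Lemma modn_lt2 p x : x < 2 * p -> x %% p = if x < p then x else x - p.
Proof.
case: ifP => h hx; first by rewrite modn_small.
have -> : x = (x - p) + p by lia.
by rewrite modnDr modn_small; lia.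
Qed.

Lemma mod_inj p q u a c : u < p -> a < q -> c < q -> q <= p ->
  ((u + a) %% p == (u + c) %% p) = (a == c).
Proof.
move=> hu ha hc hq; rewrite !modn_lt2; try lia.
repeat case: ifP; lia.
Qed.

Lemma mod_far p q u v a c : u < p -> v < p -> a < q -> c < q -> 2 * q <= p ->
  q <= minn ((u - v) + (v - u)) (p - ((u - v) + (v - u))) ->
  ((u + a) %% p == (v + c) %% p) = false.
Proof.
move=> hu hv ha hc hq; rewrite !modn_lt2; try lia.
repeat case: ifP; lia.
Qed.
End ArithPart.
Import ArithPart.
Local Open Scope ring_scope.
Definition orth m1 m2 d (A : 'M[C]_(m1,d)) (B : 'M[C]_(m2,d)) := A *m adjmx B = 0.

Lemma adjmxK m n (A : 'M[C]_(m,n)) : adjmx (adjmx A) = A.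
Proof. by apply/matrixP=> i j; rewrite !mxE conjCK. Qed.

Lemma adjmxM m n k (A : 'M[C]_(m,n)) (B : 'M[C]_(n,k)) :
  adjmx (A *m B) = adjmx B *m adjmx A.
Proof. by rewrite /adjmx map_mxM trmx_mul. Qed.

Lemma orth_sym m1 m2 d (A : 'M[C]_(m1,d)) (B : 'M[C]_(m2,d)) : orth A B -> orth B A.
Proof.
move=> h; rewrite /orth.
have -> : B *m adjmx A = adjmx (A *m adjmx B) by rewrite adjmxM adjmxK.
rewrite h.
by apply/matrixP=> i j; rewrite !mxE rmorph0.
Qed.

Lemma orth_subl m1 m1' m2 d (A : 'M[C]_(m1,d)) (A' : 'M[C]_(m1',d)) (B : 'M[C]_(m2,d)) :
  (A' <= A)%MS -> orth A B -> orth A' B.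
Proof. by case/submxP=> D ->; rewrite /orth -mulmxA => ->; rewrite mulmx0. Qed.

Lemma orth_subr m1 m2 m2' d (A : 'M[C]_(m1,d)) (B : 'M[C]_(m2,d)) (B' : 'M[C]_(m2',d)) :
  (B' <= B)%MS -> orth A B -> orth A B'.
Proof. by move=> s /orth_sym h; apply: orth_sym; apply: orth_subl h. Qed.

Lemma orth_addl m1 m2 m3 d (A : 'M[C]_(m1,d)) (B : 'M[C]_(m2,d)) (D : 'M[C]_(m3,d)) :
  orth A D -> orth B D -> orth (A + B)%MS D.
Proof.
move=> hA hB; apply: (@orth_subl _ _ _ _ (col_mx A B)); first by rewrite addsmxE.
by rewrite /orth mul_col_mx hA hB col_mx0.
Qed.

Lemma orth_self m d (A : 'M[C]_(m,d)) : orth A A -> A = 0.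
Proof.
move=> h; apply/matrixP=> i j; rewrite mxE.
have /matrixP/(_ i i) := h; rewrite mxE [RHS]mxE => e.
have : \sum_(k < d) A i k * (A i k)^* = 0.
  by rewrite -[RHS]e; apply: eq_bigr => k _; rewrite /adjmx !mxE.
move/eqP; rewrite psumr_eq0; last by move=> k _; apply: mul_conjC_ge0.
by move/allP/(_ j (mem_index_enum _)); rewrite mul_conjC_eq0 => /eqP.
Qed.

Lemma orth_cap m1 m2 d (A : 'M[C]_(m1,d)) (B : 'M[C]_(m2,d)) :
  orth A B -> \rank (A + B)%MS = (\rank A + \rank B)%N.
Proof.
move=> h; rewrite -mxrank_sum_cap.
have -> : (A :&: B)%MS = 0; last by rewrite mxrank0 addn0.
apply: orth_self; apply: (orth_subl (capmxSl A B)); exact: orth_subr (capmxSr A B) h.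
Qed.
Lemma orth0 m d (B : 'M[C]_(m,d)) : orth (0 : 'M[C]_d) B.
Proof. by rewrite /orth mul0mx. Qed.

Lemma orth_sum d m2 (W : nat -> 'M[C]_d) (B : 'M[C]_(m2,d)) m :
  (forall x, (x < m)%N -> orth (W x) B) -> orth (\sum_(0 <= x < m) W x)%MS B.
Proof.
elim: m => [|m IH] h; first by rewrite big_nil; apply: orth0.
rewrite big_nat_recr //=; apply: orth_addl; last exact: h.
by apply: IH => x hx; apply: h; rewrite ltnS ltnW.
Qed.

Lemma base_claim p d (W : nat -> 'M[C]_d) :
  (forall x y, (x < p)%N -> (y < p)%N -> x != y -> orth (W x) (W y)) ->
  (\sum_(0 <= x < p) \rank (W x) <= d)%N.
Proof.
move=> h.
suff: forall m, (m <= p)%N -> \rank (\sum_(0 <= x < m) W x)%MS = \sum_(0 <= x < m) \rank (W x).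
  by move/(_ p (leqnn p)) <-; apply: rank_leq_col.
elim=> [|m IH] hm; first by rewrite !big_nil mxrank0.
rewrite !big_nat_recr //= orth_cap ?IH ?(ltnW hm) //.
apply: orth_sum => x hx; apply: h => //; first by apply: ltn_trans hm.
by rewrite neq_ltn hx.
Qed.

Definition Claim p q := forall d (W : nat -> 'M[C]_d),
  (forall x y, (x < p)%N -> (y < p)%N -> far p q x y -> orth (W x) (W y)) ->
  (\sum_(0 <= x < p) \rank (W x) <= q * d)%N.

Lemma claim1 p : Claim p 1.
Proof.
move=> d W h; rewrite mul1n; apply: base_claim => x y hx hy hxy.
apply: h => //; move: hxy; rewrite /far /off; case: ifP; lia.
Qed.

Lemma sum_rot p (f : nat -> nat) :
  (\sum_(0 <= x < p) f (sc p x) = \sum_(0 <= x < p) f x)%N.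
Proof.
case: p => [|p]; first by rewrite !big_nil.
rewrite big_nat_recr //= big_nat_recl //= {2}/sc eqxx addnC; congr (_ + _)%N.
apply: eq_big_nat => x /andP[_ hx]; rewrite /sc; case: ifP => //; lia.
Qed.

Lemma odd_step p q : (2 <= q)%N -> (2 * q <= p)%N -> Claim p q.-1 -> Claim p q.+1 ->
  Claim p q.
Proof.
move=> hq hp Cm Cp d W hW.
pose U x := (W x + W (sc p x))%MS.
pose V x := (W x :&: W (sc p x))%MS.
have hU : forall x y, (x < p)%N -> (y < p)%N -> far p q.+1 x y -> orth (U x) (U y).
  move=> x y hx hy hf; have [] := @far_U p q x y hx hy (ltnW hq) hf => f1 f2 f3 f4.
  have hsx := sc_lt hx; have hsy := sc_lt hy.
  apply: orth_addl; apply: orth_sym; apply: orth_addl; apply: orth_sym; exact: hW.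
have hV : forall x y, (x < p)%N -> (y < p)%N -> far p q.-1 x y -> orth (V x) (V y).
  move=> x y hx hy hf; have hsx := sc_lt hx; have hsy := sc_lt hy.
  case: (@far_V p q x y hx hy hq hp hf) => f.
  - apply: (orth_subl (capmxSl _ _)); apply: (orth_subr (capmxSl _ _)); exact: hW.
  - apply: (orth_subl (capmxSl _ _)); apply: (orth_subr (capmxSr _ _)); exact: hW.
  - apply: (orth_subl (capmxSr _ _)); apply: (orth_subr (capmxSl _ _)); exact: hW.
have := Cp d U hU; have := Cm d V hV.
have E : (\sum_(0 <= x < p) \rank (U x) + \sum_(0 <= x < p) \rank (V x) =
          2 * \sum_(0 <= x < p) \rank (W x))%N.
  rewrite -big_split /= mul2n -addnn -{2}(sum_rot p (fun x => \rank (W x))) -big_split /=.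
  by apply: eq_bigr => x _; rewrite mxrank_sum_cap.
move: E; set S := (\sum_(0 <= x < p) \rank (W x))%N.
set SU := (\sum_(0 <= x < p) _)%N; set SV := (\sum_(0 <= x < p) _)%N.
nia.
Qed.

Lemma sum_split2 a (f : nat -> nat) :
  (\sum_(0 <= x < 2 * a) f x = \sum_(0 <= i < a) f (2 * i) + \sum_(0 <= i < a) f (2 * i + 1))%N.
Proof.
elim: a => [|a IH]; first by rewrite muln0 !big_nil.
have -> : (2 * a.+1 = (2 * a).+2)%N by rewrite mulnS.
rewrite !big_nat_recr //= IH addn1; lia.
Qed.

Lemma even_step a b : Claim a b -> Claim (2 * a) (2 * b).
Proof.
move=> Ca d W hW; rewrite sum_split2.
have h1 := Ca d (fun i => W (2 * i)%N).
have h2 := Ca d (fun i => W (2 * i + 1)%N).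
have : (\sum_(0 <= i < a) \rank (W (2 * i)%N) <= b * d)%N.
  apply: h1 => x y hx hy hf; apply: hW; try lia; exact: far_even.
have : (\sum_(0 <= i < a) \rank (W (2 * i + 1)%N) <= b * d)%N.
  apply: h2 => x y hx hy hf; apply: hW; try lia; exact: far_odd.
lia.
Qed.

Lemma main n : forall q, (1 <= q <= 2 ^ n)%N -> Claim (2 ^ n.+1) q.
Proof.
elim: n => [|n IH] q hq.
  have -> : q = 1%N by lia.
  exact: claim1.
have [->|hq1] := eqVneq q 1%N; first exact: claim1.
have e2 : (2 ^ n.+2 = 2 * 2 ^ n.+1)%N by rewrite expnS.
have e1 : (2 ^ n.+1 = 2 * 2 ^ n)%N by rewrite expnS.
have ho := odd_double_half q; rewrite -muln2 in ho.
case/boolP: (odd q) ho => oq ho.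
- apply: odd_step; try lia.
  + have -> : q.-1 = (2 * q./2)%N by lia.
    rewrite e2; apply: even_step; apply: IH; lia.
  + have -> : q.+1 = (2 * (q./2).+1)%N by lia.
    rewrite e2; apply: even_step; apply: IH; lia.
- have -> : q = (2 * q./2)%N by lia.
  rewrite e2; apply: even_step; apply: IH; lia.
Qed.
Lemma sum_delta p (x y : nat) : (x < p)%N ->
  \sum_(b < p) (((b : nat) == x)%:R * ((b : nat) == y)%:R : C) = (x == y)%:R.
Proof.
move=> hx; rewrite (bigD1 (Ordinal hx)) //= eqxx mul1r big1 ?addr0 // => b hb.
have -> : ((b : nat) == x) = false.
  by apply/negbTE; apply: contra hb => /eqP e; apply/eqP/val_inj.
by rewrite mul0r.
Qed.

Definition Wrep (p q : nat) (i : 'I_p) : 'M[C]_(q, p) :=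
  \matrix_(a < q, b < p) (((b : nat) == (i + a) %% p)%N%:R).

Lemma Wrep_mul p q (hp : (0 < p)%N) (i j : 'I_p) a c :
  (Wrep q i *m adjmx (Wrep q j)) a c = (((i + a) %% p)%N == ((j + c) %% p)%N)%:R.
Proof.
rewrite !mxE -(sum_delta _ (ltn_pmod _ hp)); apply: eq_bigr => b _.
by rewrite /adjmx !mxE rmorph_nat.
Qed.

Lemma Wrep_rank p q (hp : (0 < p)%N) (hq : (q <= p)%N) (i : 'I_p) :
  \rank (Wrep q i) = q.
Proof.
apply/eqP; rewrite eqn_leq rank_leq_row /=.
have e : Wrep q i *m adjmx (Wrep q i) = 1%:M.
  by apply/matrixP => a c; rewrite (Wrep_mul hp) !mxE (@mod_inj p q).
apply: (leq_trans _ (mxrankM_maxl _ (adjmx (Wrep q i)))).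
by rewrite e mxrank1.
Qed.

Theorem corollary18 (n q : nat) :
  (1 <= n)%N -> (1 <= q <= 2 ^ n.-1)%N ->
  xi_f_bar (fraction_graph (2 ^ n) q) = (2 ^ n)%:R / q%:R.
Proof.
move=> hn hq.
set p := (2 ^ n)%N.
have hpe : p = (2 ^ (n.-1).+1)%N by rewrite /p prednK.
have hp : (0 < p)%N by rewrite expn_gt0.
have h2q : (2 * q <= p)%N by rewrite hpe expnS; lia.
have Cl : Claim p q by rewrite hpe; apply: main.
have q0 : (0 < q)%N by lia.
set E := [set x : Rdefinitions.R | exists d r : nat, (0 < d)%N /\ (0 < r)%N /\
         subspace_rep (fraction_graph p q) d r /\ x = (d%:R / r%:R)]%classic.
have lb : lbound E (p%:R / q%:R).
  move=> x [d [r [d0 [r0 [[W [Wr Wo]] ->]]]]].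
  pose W' (x : nat) : 'M[C]_d :=
    if (insub x : option 'I_p) is Some i then <<W i>>%MS else 0.
  have W'E : forall i : 'I_p, W' i = <<W i>>%MS by move=> i; rewrite /W' valK.
  have : (\sum_(0 <= x < p) \rank (W' x) <= q * d)%N.
    apply: Cl => x0 y hx hy hf.
    have := far_cyc hx hy q0 hf => /andP[hxy hc].
    rewrite -[x0]/(val (Ordinal hx)) -[y]/(val (Ordinal hy)) !W'E.
    apply: (orth_subl (A := W (Ordinal hx))); first by rewrite genmxE.
    apply: (orth_subr (B := W (Ordinal hy))); first by rewrite genmxE.
    apply: Wo; first by [].
    by rewrite /fraction_graph /cycdist /= hxy /= -leqNgt.
  rewrite big_mkord (eq_bigr (fun _ => r)); last first.
    by move=> i _; rewrite W'E genmxE Wr.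
  rewrite big_const_ord iter_addn_0 => hle.
  rewrite ler_pdivrMr ?ltr0n // mulrAC ler_pdivlMr ?ltr0n // -!natrM ler_nat.
  lia.
have mem : E (p%:R / q%:R).
  exists p, q; split; first by []; split; first by [].
  split; last by [].
  exists (Wrep q); split; first by move=> v; apply: Wrep_rank; lia.
  move=> u v huv hadj; apply/matrixP => a c; rewrite (Wrep_mul hp) mxE.
  rewrite (@mod_far p q) //.
  by move: hadj; rewrite /fraction_graph /cycdist huv /= -leqNgt.
apply: order.Order.POrderTheory.le_anti; apply/andP; split.
  by apply: ge_inf => //; exists (p%:R / q%:R).
by apply: lb_le_inf => //; exists (p%:R / q%:R).
Qed.
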